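(* Let $H$ be a complex Hilbert space, $\varphi,\psi:[0,1]\to\mathbb{R}$ continuous, $A\in\mathbb{B}(H)$ and $t\in[0,1]$. Then $$\omega_t^2(\varphi,\psi;A)\le\frac12\big(|\varphi(t)|^2+|\psi(t)|^2\big)\|A^*A+AA^*\|+|\varphi(t)\psi(t)|\,\omega\big(A^2+(A^* )^2\big).$$
   Context: $S_1(H)$ is the unit sphere of $H$, $\omega(T)=\sup_{x\in S_1(H)}|\langle Tx,x\rangle|$, and $\omega_t(\varphi,\psi;A)=\sup_{x\in S_1(H)}|\langle(\varphi(t)A+\psi(t)A^* )x,x\rangle|$. *)

(* Defs.v *)
From HB Require Import structures.
From mathcomp Require Import all_boot all_order all_algebra.
From mathcomp Require Import all_classical all_reals all_analysis.
From mathcomp Require Import complex.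
Set Implicit Arguments. Unset Strict Implicit. Unset Printing Implicit Defensive.
Import Order.TTheory GRing.Theory Num.Theory.
Local Open Scope classical_set_scope.
Local Open Scope ring_scope.

Record HilbertSpace (R : realType) := {
  hcar :> lmodType R[i];
  hinner : hcar -> hcar -> R[i];
  hinner_linear : forall (a : R[i]) (x y z : hcar),
      hinner (a *: x + y) z = a * hinner x z + hinner y z;
  hinner_conj : forall x y : hcar, hinner y x = conjc (hinner x y);
  hinner_pos : forall x : hcar, 0 <= complex.Re (hinner x x);
  hinner_def : forall x : hcar, hinner x x = 0 -> x = 0;
  hcomplete : forall u : nat -> hcar,
      (forall e : R, 0 < e -> exists N : nat, forall m n : nat,
          (N <= m)%N -> (N <= n)%N ->
          Num.sqrt (complex.Re (hinner (u m - u n) (u m - u n))) < e) ->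
      exists l : hcar, forall e : R, 0 < e -> exists N : nat, forall n : nat,
          (N <= n)%N -> Num.sqrt (complex.Re (hinner (u n - l) (u n - l))) < e
}.

Definition cabs (R : realType) (z : R[i]) : R :=
  Num.sqrt (complex.Re z ^+ 2 + complex.Im z ^+ 2).

Section Ops.
Variables (R : realType) (H : HilbertSpace R).

Definition inner (x y : H) : R[i] := hinner x y.
Definition hnorm (x : H) : R := Num.sqrt (complex.Re (inner x x)).
Definition unit_sphere : set H := [set x | hnorm x = 1].

Definition bounded_linear (T : H -> H) : Prop :=
  (forall (a : R[i]) (x y : H), T (a *: x + y) = a *: T x + T y) /\
  (exists M : R, forall x : H, hnorm (T x) <= M * hnorm x).

Definition is_adjoint (T S : H -> H) : Prop :=
  forall x y : H, inner (T x) y = inner x (S y).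

Definition opnorm (T : H -> H) : R := sup [set hnorm (T x) | x in unit_sphere].

Definition numrad (T : H -> H) : R :=
  sup [set cabs (inner (T x) x) | x in unit_sphere].

Definition omega_t (phi psi : R -> R) (A Astar : H -> H) (t : R) : R :=
  numrad (fun x => (phi t)%:C%C *: A x + (psi t)%:C%C *: Astar x).

End Ops.

(* Main.v *)
Require Import Defs.
From HB Require Import structures.
From mathcomp Require Import all_boot all_order all_algebra.
From mathcomp Require Import all_classical all_reals all_analysis.
From mathcomp Require Import complex.
From mathcomp Require Import ring lra.
Import Order.TTheory GRing.Theory Num.Theory.
Local Open Scope classical_set_scope.
Local Open Scope ring_scope.
Import numFieldNormedType.Exports.

Section S.
Context {R : realType} {H : HilbertSpace R}.
Implicit Types (x y z u v : H).
Local Notation "<< x , y >>" := (@inner R H x y).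

Lemma inner0l z : << 0, z >> = 0.
Proof.
have := hinner_linear 1 (0:H) 0 z; rewrite scale1r addr0 mul1r.
by move=> h; apply: (@addrI _ (inner 0 z)); rewrite addr0 /inner -h.
Qed.

Lemma innerDl x y z : << x + y, z >> = << x, z >> + << y, z >>.
Proof. by have := hinner_linear 1 x y z; rewrite scale1r mul1r. Qed.

Lemma innerZl a x z : << a *: x, z >> = a * << x, z >>.
Proof. rewrite /inner -[a *: x]addr0 hinner_linear; have := inner0l z; rewrite /inner => ->; rewrite addr0. done. Qed.

Lemma innerC x y : << y, x >> = conjc << x, y >>.
Proof. exact: hinner_conj. Qed.

Lemma innerDr x y z : << z, x + y >> = << z, x >> + << z, y >>.
Proof. by rewrite innerC innerDl rmorphD /= -!innerC. Qed.

Lemma innerZr a x z : << z, a *: x >> = conjc a * << z, x >>.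
Proof. by rewrite innerC innerZl rmorphM /= -!innerC. Qed.

Lemma Im_self x : complex.Im << x, x >> = 0.
Proof.
have := innerC x x; case: (<< x, x >>) => a b /= [] h; lra.
Qed.

Lemma Re_self_ge0 x : 0 <= complex.Re << x, x >>.
Proof. exact: hinner_pos. Qed.

Lemma self_real x : << x, x >> = (complex.Re << x, x >>)%:C%C.
Proof. by have := Im_self x; case: (<< x, x >>) => a b /= ->. Qed.

Lemma hnorm_sq x : hnorm x ^+ 2 = complex.Re << x, x >>.
Proof. by rewrite /hnorm sqr_sqrtr // Re_self_ge0. Qed.

Lemma hnorm_ge0 x : 0 <= hnorm x.
Proof. exact: sqrtr_ge0. Qed.

Lemma cabs_sq (w : R[i]) : cabs w ^+ 2 = complex.Re w ^+ 2 + complex.Im w ^+ 2.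
Proof. by rewrite /cabs sqr_sqrtr // addr_ge0 // sqr_ge0. Qed.

Lemma cabs_ge0 (w : R[i]) : 0 <= cabs w.
Proof. exact: sqrtr_ge0. Qed.

Lemma le_sq (a b : R) : 0 <= b -> a ^+ 2 <= b ^+ 2 -> a <= b.
Proof. move=> hb h; nra. Qed.

Lemma Re_le_cabs (w : R[i]) : `|complex.Re w| <= cabs w.
Proof.
apply: le_sq; first exact: cabs_ge0.
rewrite cabs_sq real_normK ?num_real //. have := sqr_ge0 (complex.Im w). lra.
Qed.

Lemma inner0r z : << z, 0 >> = 0.
Proof. by rewrite innerC inner0l conjc0. Qed.

Lemma cabs0 : cabs (0 : R[i]) = 0.
Proof. by rewrite /cabs /= expr0n /= addr0 sqrtr0. Qed.

Lemma CS_sq u y : cabs << u, y >> ^+ 2 <= complex.Re << u, u >> * complex.Re << y, y >>.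
Proof.
set Y := complex.Re << y, y >>.
have Y0 : 0 <= Y by exact: Re_self_ge0.
have hyy : << y, y >> = Y%:C%C by exact: self_real.
have [Yz|Yn] := eqVneq Y 0.
  have y0 : y = 0 by apply: hinner_def; move: hyy; rewrite Yz /inner => ->.
  by rewrite y0 inner0r cabs0 Yz expr0n /= mulr0.
have hY : 0 < Y by rewrite lt_def Yn Y0.
have hpos := Re_self_ge0 ((Y%:C%C) *: u - << u, y >> *: y).
rewrite innerDl -scaleNr !innerZl !innerDr !innerZr in hpos.
rewrite hyy (innerC u y) in hpos.
rewrite cabs_sq.
move: hpos; case: (<< u, y >>) => a b; case: (<< u, u >>) => p q.
rewrite /= => hpos.
have : 0 <= Y * (Y * p - (a ^+ 2 + b ^+ 2)).
  move: hpos; simpc; rewrite /=. move=> h. nra.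
nra.
Qed.

Lemma CS u y : cabs << u, y >> <= hnorm u * hnorm y.
Proof.
apply: le_sq; first by rewrite mulr_ge0 // hnorm_ge0.
by rewrite exprMn !hnorm_sq CS_sq.
Qed.

Lemma cabs_conj (w : R[i]) : cabs (conjc w) = cabs w.
Proof. by case: w => p q; rewrite /cabs /= sqrrN. Qed.

Lemma hnormD u v : hnorm (u + v) <= hnorm u + hnorm v.
Proof.
apply: le_sq; first by rewrite addr_ge0 // hnorm_ge0.
have h1 := Re_le_cabs << u, v >>.
have h2 := CS u v.
have hu := hnorm_ge0 u; have hv := hnorm_ge0 v.
have eu := hnorm_sq u; have ev := hnorm_sq v.
rewrite sqrrD !hnorm_sq innerDl !innerDr (innerC u v).
move: h1 h2 eu ev; case: (<< u, v >>) => p q.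
case: (<< u, u >>) => p1 q1; case: (<< v, v >>) => p2 q2 /= h1 h2 eu ev.
have : p <= hnorm u * hnorm v.
  have := ler_norm p. lra.
lra.
Qed.

Lemma adj_bound (A S : H -> H) : bounded_linear A -> is_adjoint A S ->
  exists M : R, 0 <= M /\ (forall y, hnorm (A y) <= M * hnorm y) /\
     (forall y, hnorm (S y) <= M * hnorm y).
Proof.
move=> [_ [M hM]] hadj.
have hA : forall y, hnorm (A y) <= `|M| * hnorm y.
  move=> y; apply: (le_trans (hM y)); apply: ler_wpM2r; first exact: hnorm_ge0.
  exact: ler_norm.
exists `|M|; split => //; split => // y.
set n := hnorm (S y).
have n0 : 0 <= n by exact: hnorm_ge0.
have hy := hnorm_ge0 y.
have hM0 : 0 <= `|M| by [].
have h : n ^+ 2 <= `|M| * n * hnorm y.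
  rewrite /n hnorm_sq -hadj.
  apply: (le_trans (ler_norm _)); apply: (le_trans (Re_le_cabs _)).
  apply: (le_trans (CS _ _)); apply: ler_wpM2r => //.
have k0 : 0 <= `|M| * hnorm y by rewrite mulr_ge0.
move: h k0; rewrite -mulrA [n * _]mulrC mulrA; set k := `|M| * hnorm y => h k0.
nra.
Qed.

Lemma perx (A S : H -> H) (a b : R) x : is_adjoint A S ->
  complex.Re << x, x >> = 1 ->
  cabs << a%:C%C *: A x + b%:C%C *: S x, x >> ^+ 2 <=
  2^-1 * (a ^+ 2 + b ^+ 2) * complex.Re << S (A x) + A (S x), x >>
  + a * b * complex.Re << A (A x) + S (S x), x >>.
Proof.
move=> hadj hx.
have h1 := CS_sq (a%:C%C *: A x + b%:C%C *: S x) x.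
have h2 := CS_sq (a%:C%C *: S x + b%:C%C *: A x) x.
rewrite hx mulr1 in h1; rewrite hx mulr1 in h2.
have eSx : << S x, x >> = conjc << A x, x >>.
  by rewrite innerC hadj.
have eSA : << S x, A x >> = conjc << A x, S x >> by rewrite innerC.
have eSAx : << S (A x), x >> = conjc << A x, A x >> by rewrite innerC hadj.
have eASx : << A (S x), x >> = << S x, S x >> by rewrite hadj.
have eAAx : << A (A x), x >> = << A x, S x >> by rewrite hadj.
have eSSx : << S (S x), x >> = conjc << A x, S x >> by rewrite innerC hadj.
rewrite !innerDl !innerZl !innerDr !innerZr !conjc_real in h1 h2.
rewrite !innerDl !innerZl eSAx eASx eAAx eSSx eSx.
rewrite eSx eSA in h1 h2.
move: h1 h2; rewrite !cabs_sq.
case: (<< A x, x >>) => w1 w2; case: (<< A x, S x >>) => z1 z2.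
case: (<< A x, A x >>) => p1 p2; case: (<< S x, S x >>) => q1 q2.
simpc; rewrite /= => h1 h2.
nra.
Qed.
End S.

Theorem theorem3p9 (R : realType) (H : HilbertSpace R) (phi psi : R -> R)
    (A Astar : H -> H) (t : R) :
  {within `[(0:R), 1]%classic, continuous phi} ->
  {within `[(0:R), 1]%classic, continuous psi} ->
  bounded_linear A ->
  is_adjoint A Astar ->
  t \in `[0, 1] ->
  omega_t phi psi A Astar t ^+ 2 <=
    2^-1 * (`|phi t| ^+ 2 + `|psi t| ^+ 2)
      * opnorm (fun x => Astar (A x) + A (Astar x))
    + `|phi t * psi t| * numrad (fun x => A (A x) + Astar (Astar x)).
Proof.
move=> _ _ hA hadj _.
have [M [M0 [hAM hSM]]] := adj_bound _ _ hA hadj.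
rewrite /omega_t /numrad /opnorm.
set a := phi t; set b := psi t.
set E := [set cabs _ | x in _].
set E1 := [set hnorm _ | x in _].
set E2 := [set cabs _ | x in _].
have [[x0 hx0]|hne] := pselect (exists x, @unit_sphere R H x); last first.
  have e : @unit_sphere R H = set0.
    by apply/seteqP; split => x // hx; exfalso; apply: hne; exists x.
  by rewrite /E /E1 /E2 e !image_set0 !sup0 expr0n /= !mulr0 addr0.
have hunit : forall x, @unit_sphere R H x -> complex.Re (inner x x) = 1.
  by move=> x hx; rewrite -hnorm_sq hx expr1n.
have hCb : forall x, @unit_sphere R H x ->
    hnorm (Astar (A x) + A (Astar x)) <= M * M + M * M.
  move=> x hx; apply: (le_trans (hnormD _ _)); apply: lerD.
    apply: (le_trans (hSM _)); apply: ler_wpM2l => //.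
    by apply: (le_trans (hAM _)); rewrite hx mulr1.
  apply: (le_trans (hAM _)); apply: ler_wpM2l => //.
  by apply: (le_trans (hSM _)); rewrite hx mulr1.
have hBb : forall x, @unit_sphere R H x ->
    cabs (inner (A (A x) + Astar (Astar x)) x) <= M * M + M * M.
  move=> x hx; apply: (le_trans (CS _ _)); rewrite hx mulr1.
  apply: (le_trans (hnormD _ _)); apply: lerD.
    apply: (le_trans (hAM _)); apply: ler_wpM2l => //.
    by apply: (le_trans (hAM _)); rewrite hx mulr1.
  apply: (le_trans (hSM _)); apply: ler_wpM2l => //.
  by apply: (le_trans (hSM _)); rewrite hx mulr1.
have ub1 : has_ubound E1.
  by exists (M * M + M * M) => _ [x hx <-]; exact: hCb.
have ub2 : has_ubound E2.
  by exists (M * M + M * M) => _ [x hx <-]; exact: hBb.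
set K := (X in _ <= X).
have key : forall x, @unit_sphere R H x ->
    cabs (inner (a%:C%C *: A x + b%:C%C *: Astar x) x) ^+ 2 <= K.
  move=> x hx.
  apply: (le_trans (perx _ _ a b x hadj (hunit x hx))).
  rewrite /K !real_normK ?num_real //.
  apply: lerD.
    apply: ler_wpM2l; first by rewrite mulr_ge0 // ?invr_ge0 ?ler0n // addr_ge0 // sqr_ge0.
    apply: (le_trans (ler_norm _)); apply: (le_trans (Re_le_cabs _)).
    apply: (le_trans (CS _ _)); rewrite hx mulr1.
    by apply: ub_le_sup => //; exists x.
  apply: (le_trans (ler_norm _)); rewrite normrM.
  apply: ler_wpM2l => //.
  apply: (le_trans (Re_le_cabs _)).
  by apply: ub_le_sup => //; exists x.
have K0 : 0 <= K.
  apply: le_trans (key x0 hx0); exact: sqr_ge0.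
have hE : ubound E (Num.sqrt K).
  move=> _ [x hx <-]; apply: le_sq; first exact: sqrtr_ge0.
  by rewrite (sqr_sqrtr K0); exact: key.
have s1 : sup E <= Num.sqrt K.
  by apply: ge_sup => //; exists (cabs (inner (a%:C%C *: A x0 + b%:C%C *: Astar x0) x0)), x0.
have s0 : 0 <= sup E.
  apply: (le_trans (cabs_ge0 (inner (a%:C%C *: A x0 + b%:C%C *: Astar x0) x0))).
  by apply: ub_le_sup; [exists (Num.sqrt K) | exists x0].
have := sqrtr_ge0 K; have := sqr_sqrtr K0.
nra.
Qed.
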